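(* For all positive integers $b_1,\dots,b_k$, $$\operatorname{op}_{[b_1,\dots,b_k]}(123)=\operatorname{op}_{[b_1,\dots,b_k]}(132).$$
   Context: An ordered set partition of $[N]$ into $k$ blocks is a sequence $B_1/B_2/\cdots/B_k$ of nonempty, pairwise disjoint subsets of $[N]$ whose union is $[N]$; the order of the blocks matters, but not the order of elements within a block. For a permutation $\rho=\rho_1\cdots\rho_m\in\mathcal{S}_m$, an ordered partition $B_1/\cdots/B_k$ contains $\rho$ if there are block indices $i_1<i_2<\cdots<i_m$ and elements $b_j\in B_{i_j}$ such that $b_1\cdots b_m$ is order-isomorphic to $\rho$ (i.e. $b_a<b_c$ iff $\rho_a<\rho_c$); otherwise it avoids $\rho$. For positive integers $b_1,\dots,b_k$, $\operatorname{op}_{[b_1,\dots,b_k]}(\rho)$ is the number of $\rho$-avoiding ordered partitions $B_1/\cdots/B_k$ of $[b_1+\cdots+b_k]$ with $|B_i|=b_i$ for all $i$. *)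

(* Defs.v *)
From mathcomp Require Import all_boot all_fingroup.
Set Implicit Arguments. Unset Strict Implicit. Unset Printing Implicit Defensive.

(* [N] is modelled by 'I_N = {0,...,N-1} (order-isomorphic to {1,...,N}).
   An ordered set partition B_1/.../B_k is a k-indexed family of subsets. *)
Definition ordered_set_partition (N k : nat) (B : {ffun 'I_k -> {set 'I_N}}) : bool :=
  [&& [forall i, B i != set0],
      [forall i, forall j, (i != j) ==> [disjoint B i & B j]]
    & (\bigcup_(i < k) B i == [set: 'I_N])].

Definition contains_pattern (N k m : nat) (B : {ffun 'I_k -> {set 'I_N}})
    (rho : {perm 'I_m}) : bool :=
  [exists ix : {ffun 'I_m -> 'I_k}, exists e : {ffun 'I_m -> 'I_N},
     [&& [forall a : 'I_m, forall c : 'I_m, (a < c) ==> (ix a < ix c)],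
         [forall j : 'I_m, e j \in B (ix j)]
       & [forall a : 'I_m, forall c : 'I_m, (e a < e c) == (rho a < rho c)]]].

Definition op (k : nat) (b : 'I_k -> nat) (m : nat) (rho : {perm 'I_m}) : nat :=
  #|[set B : {ffun 'I_k -> {set 'I_(\sum_(i < k) b i)}} |
      [&& ordered_set_partition B,
          [forall i, #|B i| == b i]
        & ~~ contains_pattern B rho]]|.

(* the patterns 123 and 132 in S_3 (0-indexed: 012 and 021) *)
Definition pat123 : {perm 'I_3} := 1%g.
Definition pat132 : {perm 'I_3} := tperm (@Ordinal 3 1 isT) (@Ordinal 3 2 isT).

(* Main.v *)
Require Import Defs.
From mathcomp Require Import all_boot all_fingroup.
Set Implicit Arguments. Unset Strict Implicit. Unset Printing Implicit Defensive.


Fixpoint dab (t : nat) (s : seq nat) : bool :=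
  if s is x :: u then dab t u && ((t < x) ==> all (fun y => (t < y) ==> (y <= x)) u) else true.
Fixpoint iab (t : nat) (s : seq nat) : bool :=
  if s is x :: u then iab t u && ((t < x) ==> all (fun y => (t < y) ==> (x <= y)) u) else true.
Fixpoint av123 (s : seq nat) : bool :=
  if s is x :: u then av123 u && dab x u else true.
Fixpoint av132 (s : seq nat) : bool :=
  if s is x :: u then av132 u && iab x u else true.

Lemma dab_mono t1 t2 s : t1 <= t2 -> dab t1 s -> dab t2 s.
Proof.
move=> le; elim: s => //= x u IH /andP[/IH -> /implyP H] /=.
apply/implyP => lt2; have /allP A := H (leq_ltn_trans le lt2).
apply/allP => y yu; apply/implyP => ty; have := A y yu.
by rewrite (leq_ltn_trans le ty).
Qed.

Lemma iab_mono t1 t2 s : t1 <= t2 -> iab t1 s -> iab t2 s.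
Proof.
move=> le; elim: s => //= x u IH /andP[/IH -> /implyP H] /=.
apply/implyP => lt2; have /allP A := H (leq_ltn_trans le lt2).
apply/allP => y yu; apply/implyP => ty; have := A y yu.
by rewrite (leq_ltn_trans le ty).
Qed.

Lemma dab_low t s : all (fun y => y <= t) s -> dab t s.
Proof.
elim: s => //= x u IH /andP[xt A]; rewrite IH //=.
by rewrite ltnNge xt.
Qed.

Lemma iab_low t s : all (fun y => y <= t) s -> iab t s.
Proof.
elim: s => //= x u IH /andP[xt A]; rewrite IH //=.
by rewrite ltnNge xt.
Qed.

Definition cont (k : nat) (c : nat -> nat) (s : seq nat) : bool :=
  all (fun y => count_mem y s == c y) (iota 0 k).

Definition dec (c : nat -> nat) (x : nat) : nat -> nat :=
  fun y => if y == x then (c y).-1 else c y.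

Lemma cont_cons k c x u : x < k ->
  cont k c (x :: u) = (0 < c x) && cont k (dec c x) u.
Proof.
move=> xk; rewrite /cont /dec.
apply/allP/andP => [H|[cx /allP H] y yk].
  have := H x; rewrite mem_iota add0n xk /= eqxx add1n => /(_ isT) /eqP Hx.
  split; first by rewrite -Hx.
  apply/allP => y yk; have := H y yk; rewrite /=.
  case: (eqVneq y x) => [->|ne]; first by rewrite -Hx.
  by [].
have := H y yk; rewrite /=.
case: (eqVneq y x) => [->|ne]; first by rewrite add1n => /eqP ->; rewrite prednK.
by [].
Qed.

Fixpoint all_words (k n : nat) : seq (seq nat) :=
  if n is n'.+1 then [seq x :: u | x <- iota 0 k, u <- all_words k n'] else [:: [::]].

Lemma mem_all_words k n s : (s \in all_words k n) = (size s == n) && all (fun y => y < k) s.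
Proof.
elim: n s => [|n IH] s.
  by case: s.
apply/allpairsP/andP => [[[y v] /= [yk vw ->]]|[sz al]].
  move: vw; rewrite IH /= => /andP[/eqP -> ->]; move: yk; rewrite mem_iota /= => ->.
  by [].
case: s sz al => // x u /= /eqP[sz] /andP[xk al].
by exists (x, u); rewrite mem_iota /= xk IH sz eqxx.
Qed.

Lemma uniq_all_words k n : uniq (all_words k n).
Proof.
elim: n => //= n IH; apply: allpairs_uniq => //; first exact: iota_uniq.
by move=> [a b] [c d] _ _ [-> ->].
Qed.

Lemma count_aw k n (P : pred (seq nat)) :
  count P (all_words k n.+1) = \sum_(x < k) count (fun u : seq nat => P (nat_of_ord x :: u)) (all_words k n).
Proof.
rewrite /= count_flatten sumnE big_map.
rewrite -(big_mkord xpredT (fun x => count (fun u : seq nat => P (x :: u)) (all_words k n))).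
rewrite big_map /index_iota subn0; apply: eq_bigr => x _.
by rewrite count_map.
Qed.

Definition P123 k t c := fun s => [&& cont k c s, av123 s & dab t s].
Definition P132 k t c := fun s => [&& cont k c s, av132 s & iab t s].

Lemma aw_lt k n u y : u \in all_words k n -> y \in u -> y < k.
Proof. by rewrite mem_all_words => /andP[_ /allP]; apply. Qed.

Lemma absent k c u y : cont k c u -> y < k -> c y = 0 -> y \notin u.
Proof.
move=> /allP H yk cy; apply/count_memPn.
by have := H y; rewrite mem_iota yk /= cy => /(_ isT) /eqP.
Qed.

Lemma present k c u y : cont k c u -> y < k -> 0 < c y -> y \in u.
Proof.
move=> /allP H yk cy; case: (boolP (y \in u)) => // /count_memPn C.
by have := H y; rewrite mem_iota yk /= C => /(_ isT) /eqP E; rewrite -E in cy.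
Qed.

Lemma zero_term k n c x (Q : pred (seq nat)) : x < k -> c x = 0 ->
  count (fun u => cont k c (x :: u) && Q u) (all_words k n) = 0.
Proof.
move=> xk cx; apply/eqP; rewrite -leqn0 leqNgt -has_count; apply/hasP => -[u _].
by rewrite /= cont_cons // cx.
Qed.

Lemma top123 k n t c xm : t < xm -> xm < k -> 0 < c xm ->
  (forall y, y < k -> xm < y -> c y = 0) ->
  count (fun u => P123 k t c (xm :: u)) (all_words k n) =
  count (P123 k t (dec c xm)) (all_words k n).
Proof.
move=> txm xmk cxm Hz; apply: eq_in_count => u uW.
rewrite /P123 /= cont_cons // cxm /=.
case Hc: (cont k (dec c xm) u) => //=.
have allxm : all (fun y => y <= xm) u.
  apply/allP => y yu; rewrite leqNgt; apply/negP => xy.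
  have yk := aw_lt uW yu.
  have := absent Hc yk; rewrite /dec (gtn_eqF xy) Hz // => /(_ erefl).
  by rewrite yu.
rewrite (dab_low allxm) txm /= andbT.
have -> : all (fun y => (t < y) ==> (y <= xm)) u.
  by apply/allP => y yu; rewrite (allP allxm y yu) implybT.
by rewrite andbT.
Qed.

Lemma top123_zero k n t c x xm : t < x -> x < k -> x < xm -> xm < k -> 0 < c xm ->
  count (fun u : seq nat => P123 k t c (x :: u)) (all_words k n) = 0.
Proof.
move=> tx xk xxm xmk cxm; apply/eqP; rewrite -leqn0 leqNgt -has_count; apply/hasP => -[u _].
rewrite /P123 /= cont_cons // => /and3P[/andP[_ Hc] _ /andP[_ H]].
have := present Hc xmk; rewrite /dec (gtn_eqF xxm) => /(_ cxm) xmu.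
move: H; rewrite tx /= => /allP /(_ xm xmu).
by rewrite (ltn_trans tx xxm) /= leqNgt xxm.
Qed.

Lemma top132 k n t c xm : t < xm -> xm < k -> 0 < c xm ->
  (forall y, t < y -> y < xm -> c y = 0) ->
  count (fun u => P132 k t c (xm :: u)) (all_words k n) =
  count (P132 k t (dec c xm)) (all_words k n).
Proof.
move=> txm xmk cxm Hz; apply: eq_in_count => u uW.
rewrite /P132 /= cont_cons // cxm /=.
case Hc: (cont k (dec c xm) u) => //=.
have -> : all (fun y => (t < y) ==> (xm <= y)) u.
  apply/allP => y yu; apply/implyP => ty; rewrite leqNgt; apply/negP => xy.
  have yk := aw_lt uW yu.
  have := absent Hc yk; rewrite /dec (ltn_eqF xy) Hz // => /(_ erefl).
  by rewrite yu.
rewrite txm /= andbT.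
by case: (iab t u) (@iab_mono t xm u (ltnW txm)) => /=; [move=> -> //; rewrite !andbT | rewrite !andbF].
Qed.

Lemma top132_zero k n t c x xm : t < x -> x < k -> t < xm -> xm < x -> 0 < c xm ->
  count (fun u => P132 k t c (x :: u)) (all_words k n) = 0.
Proof.
move=> tx xk txm xmx cxm; apply/eqP; rewrite -leqn0 leqNgt -has_count; apply/hasP => -[u _].
rewrite /P132 /= cont_cons // => /and3P[/andP[_ Hc] _ /andP[_ H]].
have xmk := ltn_trans xmx xk.
have := present Hc xmk; rewrite /dec (ltn_eqF xmx) => /(_ cxm) xmu.
move: H; rewrite tx /= => /allP /(_ xm xmu).
by rewrite txm /= leqNgt xmx.
Qed.

Lemma sum_eq0_above k t (c : nat -> nat) : \sum_(y < k | t < y) c y = 0 -> forall y, y < k -> t < y -> c y = 0.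
Proof.
move=> /eqP; rewrite sum_nat_eq0 => /forallP H y yk ty.
by have := H (Ordinal yk); rewrite /= ty => /eqP.
Qed.

Lemma sum_pos_above k t (c : nat -> nat) : 0 < \sum_(y < k | t < y) c y -> exists y, [&& y < k, t < y & 0 < c y].
Proof.
rewrite lt0n sum_nat_eq0 negb_forall => /existsP[y]; rewrite negb_imply -lt0n => /andP[ty cy].
by exists y; rewrite ltn_ord ty cy.
Qed.

Lemma sum_dec k t (c : nat -> nat) x : x < k -> t < x -> 0 < c x ->
  \sum_(y < k | t < y) dec c x y = (\sum_(y < k | t < y) c y).-1.
Proof.
move=> xk tx cx.
rewrite (bigD1 (Ordinal xk)) //= [in RHS](bigD1 (Ordinal xk)) //= /dec eqxx.
move: cx; case: (c x) => [//|m] _; rewrite addSn /=.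
congr (_ + _); apply: eq_bigr => y /andP[_ ne].
suff -> : (nat_of_ord y == x) = false by [].
by apply/negbTE; apply: contra ne => /eqP e; apply/eqP; apply: val_inj.
Qed.

Lemma core k n : forall t (c c' : nat -> nat), (forall y, y <= t -> c y = c' y) ->
  \sum_(y < k | t < y) c y = \sum_(y < k | t < y) c' y ->
  count (P123 k t c) (all_words k n) = count (P132 k t c') (all_words k n).
Proof.
elim: n => [|n IH] t c c' Hle Hs.
  rewrite /= /P123 /P132 /= !andbT; congr (nat_of_bool _ + 0).
  have zero : forall (d d' : nat -> nat), (forall y, y <= t -> d y = d' y) ->
      \sum_(y < k | t < y) d y = \sum_(y < k | t < y) d' y ->
      cont k d [::] -> cont k d' [::].
    move=> d d' Hd Hds /allP H; apply/allP => y; rewrite mem_iota add0n => yk.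
    have := H y; rewrite mem_iota yk => /(_ isT) /eqP Hy.
    case: (leqP y t) => yt; first by rewrite -Hd // -Hy.
    suff -> : d' y = 0 by [].
    apply: (@sum_eq0_above k t d') => //.
    rewrite -Hds; apply/eqP; rewrite sum_nat_eq0; apply/forallP => z; apply/implyP => tz.
    by have := H z; rewrite mem_iota /= ltn_ord => /(_ isT) /eqP <-.
  apply/idP/idP; apply: zero => //; by move=> y /Hle.
rewrite !count_aw.
rewrite (bigID (fun x : 'I_k => x <= t)) [RHS](bigID (fun x : 'I_k => x <= t)) /=.
congr (_ + _).
  apply: eq_bigr => x xt.
  have xk := ltn_ord x.
  have E123 : count (fun u : seq nat => P123 k t c (nat_of_ord x :: u)) (all_words k n) =
     count (fun u => (0 < c x) && P123 k x (dec c x) u) (all_words k n).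
    apply: eq_in_count => u _; rewrite /P123 /= cont_cons // (_ : (t < x) = false) /=;
      last by rewrite ltnNge xt.
    move: (@dab_mono x t u xt); case: (dab x u); case: (dab t u); case: (0 < c x);
      case: (cont k (dec c x) u); case: (av123 u) => //= H; by move: (H isT).
  have E132 : count (fun u : seq nat => P132 k t c' (nat_of_ord x :: u)) (all_words k n) =
     count (fun u => (0 < c' x) && P132 k x (dec c' x) u) (all_words k n).
    apply: eq_in_count => u _; rewrite /P132 /= cont_cons // (_ : (t < x) = false) /=;
      last by rewrite ltnNge xt.
    move: (@iab_mono x t u xt); case: (iab x u); case: (iab t u); case: (0 < c' x);
      case: (cont k (dec c' x) u); case: (av132 u) => //= H; by move: (H isT).
  rewrite E123 E132 -(Hle x xt); case: (0 < c x).
    apply: IH.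
      move=> y yx; rewrite /dec; case: (y == x); rewrite Hle //; exact: leq_trans yx xt.
    have D : forall d : nat -> nat, \sum_(y < k | x < y) dec d x y = \sum_(y < k | x < y) d y.
      move=> d; apply: eq_bigr => y xy; by rewrite /dec (gtn_eqF xy).
    rewrite !D (bigID (fun y : 'I_k => t < y)) [RHS](bigID (fun y : 'I_k => t < y)) /=.
    have B : forall d : nat -> nat, \sum_(i < k | (x < i) && (t < i)) d i = \sum_(i < k | t < i) d i.
      move=> d; apply: eq_bigl => y; case ty: (t < y); rewrite ?andbF ?andbT //.
      exact: leq_ltn_trans xt ty.
    rewrite !B Hs; congr (_ + _); apply: eq_bigr => y /andP[_]; rewrite -leqNgt; exact: Hle.
  by rewrite !count_pred0.
case: (posnP (\sum_(y < k | t < y) c y)) => [S0|Spos].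
  have S0' := S0; rewrite Hs in S0'.
  rewrite !big1 // => x; rewrite -ltnNge => tx.
    exact: (@zero_term k n c' x (fun u => av132 (nat_of_ord x :: u) && iab t (nat_of_ord x :: u)) (ltn_ord x) (sum_eq0_above S0' (ltn_ord x) tx)).
  rewrite /P123; exact: (@zero_term k n c x (fun u => av123 (nat_of_ord x :: u) && dab t (nat_of_ord x :: u)) (ltn_ord x)
      (sum_eq0_above S0 (ltn_ord x) tx)).
have Spos' := Spos; rewrite Hs in Spos'.
have ex1 := sum_pos_above Spos.
have ex2 := sum_pos_above Spos'.
have ub : forall i, [&& i < k, t < i & 0 < c i] -> i <= k by move=> i /andP[/ltnW].
case: (ex_maxnP ex1 ub) => xm /and3P[xmk txm cxm] maxH.
case: (ex_minnP ex2) => xm' /and3P[xmk' txm' cxm'] minH.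
rewrite (bigD1 (Ordinal xmk)) /=; last by rewrite -ltnNge.
rewrite [RHS](bigD1 (Ordinal xmk')) /=; last by rewrite -ltnNge.
rewrite big1 ?addn0; last first.
  move=> x /andP[]; rewrite -ltnNge => tx ne.
  have xk := ltn_ord x.
  case: (posnP (c x)) => cx.
    exact: (@zero_term k n c x (fun u => av123 (nat_of_ord x :: u) && dab t (nat_of_ord x :: u)) xk cx).
  have : x <= xm by apply: maxH; rewrite xk tx cx.
  rewrite leq_eqVlt => /orP[/eqP e|lt].
    by move: ne; rewrite (_ : x = Ordinal xmk) ?eqxx //; apply: val_inj.
  exact: top123_zero tx xk lt xmk cxm.
rewrite [in RHS]big1 ?addn0; last first.
  move=> x /andP[]; rewrite -ltnNge => tx ne.
  have xk := ltn_ord x.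
  case: (posnP (c' x)) => cx.
    exact: (@zero_term k n c' x (fun u => av132 (nat_of_ord x :: u) && iab t (nat_of_ord x :: u)) xk cx).
  have : xm' <= x by apply: minH; rewrite xk tx cx.
  rewrite leq_eqVlt => /orP[/eqP e|lt].
    by move: ne; rewrite (_ : x = Ordinal xmk') ?eqxx //; apply: val_inj.
  exact: top132_zero tx xk txm' lt cxm'.
rewrite top123 //; last first.
  move=> y yk xy; apply/eqP; rewrite -leqn0 leqNgt; apply/negP => cy.
  by have := maxH y; rewrite yk (ltn_trans txm xy) cy => /(_ isT); rewrite leqNgt xy.
rewrite top132 //; last first.
  move=> y ty yx; apply/eqP; rewrite -leqn0 leqNgt; apply/negP => cy.
  have yk := ltn_trans yx xmk'.
  by have := minH y; rewrite yk ty cy => /(_ isT); rewrite leqNgt yx.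
apply: IH.
  move=> y yt; rewrite /dec (ltn_eqF (leq_ltn_trans yt txm)) (ltn_eqF (leq_ltn_trans yt txm')).
  exact: Hle.
by rewrite !sum_dec // Hs.
Qed.
Lemma dab_iota t f m n : reflect (forall q r, m <= q -> q < r -> r < m + n -> t < f q -> f r <= f q)
  (dab t (map f (iota m n))).
Proof.
elim: n m => [|n IH] m /=.
  apply: ReflectT => q r mq qr; rewrite addn0 => rm.
  by have := leq_ltn_trans mq (ltn_trans qr rm); rewrite ltnn.
apply: (iffP andP) => [[/IH H1 /implyP H2] q r mq qr rmn tq|H].
  case: (eqVneq q m) => [eq|ne].
    subst q; have /allP := H2 tq; move=> /(_ (f r)); rewrite map_f ?mem_iota ?qr /=; last first.
      by rewrite addSnnS.
    move=> /(_ isT) /implyP H3; case: (leqP (f r) t) => [frt|tfr]; last exact: H3.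
    exact: leq_trans frt (ltnW tq).
  apply: H1 => //; first by rewrite ltn_neqAle eq_sym ne mq.
  by rewrite addSnnS.
split.
  apply/IH => q r mq qr rmn; apply: H => //; [exact: ltnW | by rewrite -addSnnS].
apply/implyP => tm; apply/allP => y /mapP[r]; rewrite mem_iota => /andP[mr rmn] ->.
apply/implyP => tr; rewrite leqNgt; apply/negP => lt.
have := H m r (leqnn m) mr; rewrite -addSnnS => /(_ rmn tm).
by rewrite leqNgt lt.
Qed.

Lemma iab_iota t f m n : reflect (forall q r, m <= q -> q < r -> r < m + n -> t < f q -> t < f r -> f q <= f r)
  (iab t (map f (iota m n))).
Proof.
elim: n m => [|n IH] m /=.
  apply: ReflectT => q r mq qr; rewrite addn0 => rm.
  by have := leq_ltn_trans mq (ltn_trans qr rm); rewrite ltnn.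
apply: (iffP andP) => [[/IH H1 /implyP H2] q r mq qr rmn tq tr|H].
  case: (eqVneq q m) => [eq|ne].
    subst q; have /allP := H2 tq; move=> /(_ (f r)); rewrite map_f ?mem_iota ?qr /=; last first.
      by rewrite addSnnS.
    by move=> /(_ isT) /implyP; apply.
  apply: H1 => //; first by rewrite ltn_neqAle eq_sym ne mq.
  by rewrite addSnnS.
split.
  apply/IH => q r mq qr rmn; apply: H => //; [exact: ltnW | by rewrite -addSnnS].
apply/implyP => tm; apply/allP => y /mapP[r]; rewrite mem_iota => /andP[mr rmn] ->.
apply/implyP => tr.
have := H m r (leqnn m) mr; rewrite -addSnnS => /(_ rmn tm tr) //.
Qed.

Lemma av123_iota f m n : reflect (forall p q r, m <= p -> p < q -> q < r -> r < m + n -> f p < f q -> f r <= f q)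
  (av123 (map f (iota m n))).
Proof.
elim: n m => [|n IH] m /=.
  apply: ReflectT => p q r mp pq qr; rewrite addn0 => rm.
  by have := leq_ltn_trans mp (ltn_trans pq (ltn_trans qr rm)); rewrite ltnn.
apply: (iffP andP) => [[/IH H1 /dab_iota H2] p q r mp pq qr rmn fpq|H].
  case: (eqVneq p m) => [eq|ne].
    subst p; apply: H2 => //; by rewrite addSnnS.
  apply: H1 fpq => //; first by rewrite ltn_neqAle eq_sym ne mp.
  by rewrite addSnnS.
split.
  apply/IH => p q r mp pq qr rmn; apply: H => //; [exact: ltnW | by rewrite -addSnnS].
apply/dab_iota => q r mq qr rmn; apply: H => //; by rewrite -addSnnS.
Qed.

Lemma av132_iota f m n : reflect (forall p q r, m <= p -> p < q -> q < r -> r < m + n -> f p < f q -> f p < f r -> f q <= f r)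
  (av132 (map f (iota m n))).
Proof.
elim: n m => [|n IH] m /=.
  apply: ReflectT => p q r mp pq qr; rewrite addn0 => rm.
  by have := leq_ltn_trans mp (ltn_trans pq (ltn_trans qr rm)); rewrite ltnn.
apply: (iffP andP) => [[/IH H1 /iab_iota H2] p q r mp pq qr rmn fpq fpr|H].
  case: (eqVneq p m) => [eq|ne].
    subst p; apply: H2 => //; by rewrite addSnnS.
  apply: H1 fpq fpr => //; first by rewrite ltn_neqAle eq_sym ne mp.
  by rewrite addSnnS.
split.
  apply/IH => p q r mp pq qr rmn; apply: H => //; [exact: ltnW | by rewrite -addSnnS].
apply/iab_iota => q r mq qr rmn; apply: H => //; by rewrite -addSnnS.
Qed.
Definition Bof N k (w : {ffun 'I_N -> 'I_k}) : {ffun 'I_k -> {set 'I_N}} :=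
  [ffun i => [set x | w x == i]].

Lemma Bof_inj N k : injective (@Bof N k).
Proof.
move=> w1 w2 E; apply/ffunP => x.
have : x \in Bof w2 (w1 x) by rewrite -E ffunE inE.
by rewrite ffunE inE => /eqP ->.
Qed.

Lemma op_words k (b : 'I_k -> nat) m (rho : {perm 'I_m}) : (forall i, 0 < b i) ->
  op b rho = #|[set w : {ffun 'I_(\sum_(i < k) b i) -> 'I_k} |
     [forall i, #|[set x | w x == i]| == b i] && ~~ contains_pattern (Bof w) rho]|.
Proof.
move=> bpos; rewrite /op -(card_imset _ (@Bof_inj _ _)); apply: eq_card => B; rewrite inE.
apply/idP/imsetP.
  case/and3P => osp sz ncp.
  have pick : forall x, {i | x \in B i}.
    move=> x; case: (pickP (fun i => x \in B i)) => [i Hi|H]; first by exists i.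
    exfalso; move: osp => /and3P[_ _ /eqP cov].
    have : x \in \bigcup_(i < k) B i by rewrite cov inE.
    by case/bigcupP => i _ xi; move: (H i); rewrite xi.
  pose w := [ffun x => sval (pick x)].
  have BE : B = Bof w.
    apply/ffunP => i; apply/setP => x; rewrite /w !ffunE inE ffunE.
    case: (pick x) => j /= xj.
    apply/idP/eqP => [xi|<-//].
    apply/eqP; apply: contraT => ne.
    move: osp => /and3P[_ /forallP D _]; have := D j; move/forallP => /(_ i).
    rewrite ne /= => /disjointFr /(_ xj).
    by rewrite xi.
  exists w; last exact: BE.
  rewrite inE -BE ncp andbT; apply/forallP => i; have := forallP sz i.
  by rewrite BE ffunE.
case=> w; rewrite inE => /andP[sz ncp] ->; rewrite ncp andbT.
apply/andP; split; last by apply/forallP => i; rewrite ffunE; exact: forallP sz i.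
apply/and3P; split.
- apply/forallP => i; rewrite ffunE -card_gt0.
  by have /eqP -> := forallP sz i.
- apply/forallP => i; apply/forallP => j; apply/implyP => ne; rewrite !ffunE.
  rewrite -setI_eq0; apply/eqP/setP => x; rewrite !inE.
  by apply/negP => /andP[/eqP -> /eqP e]; rewrite e eqxx in ne.
- apply/eqP/setP => x; rewrite inE; apply/bigcupP; exists (w x) => //.
  by rewrite ffunE inE.
Qed.

Definition o0 : 'I_3 := @Ordinal 3 0 isT.
Definition o1 : 'I_3 := @Ordinal 3 1 isT.
Definition o2 : 'I_3 := @Ordinal 3 2 isT.

Lemma p132_0 : pat132 o0 = o0. Proof. by rewrite /pat132 tpermD. Qed.
Lemma p132_1 : pat132 o1 = o2. Proof. by rewrite /pat132 tpermL. Qed.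
Lemma p132_2 : pat132 o2 = o1. Proof. by rewrite /pat132 tpermR. Qed.

Lemma ord3_cases (P : 'I_3 -> Prop) : P o0 -> P o1 -> P o2 -> forall a, P a.
Proof.
move=> H0 H1 H2 [[|[|[|a]]] Ha] //.
- by rewrite (_ : Ordinal Ha = o0) //; apply: val_inj.
- by rewrite (_ : Ordinal Ha = o1) //; apply: val_inj.
- by rewrite (_ : Ordinal Ha = o2) //; apply: val_inj.
Qed.

Lemma cp123 N k (w : {ffun 'I_N -> 'I_k}) : contains_pattern (Bof w) pat123 =
  [exists p : 'I_N, exists q : 'I_N, exists r : 'I_N, [&& p < q, q < r, w p < w q & w q < w r]].
Proof.
apply/existsP/existsP.
  case=> ix /existsP[e /and3P[/forallP Hix /forallP He /forallP Hp]].
  have We : forall j, w (e j) = ix j by move=> j; have := He j; rewrite ffunE inE => /eqP.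
  have Hp' : forall a c, (e a < e c) = (a < c).
    by move=> a c; have /forallP /(_ c) /eqP := Hp a; rewrite /pat123 !perm1.
  have Hix' : forall a c : 'I_3, a < c -> ix a < ix c.
    by move=> a c ac; have /forallP /(_ c) /implyP := Hix a; apply.
  exists (e o0); apply/existsP; exists (e o1); apply/existsP; exists (e o2).
  by rewrite !Hp' !We !Hix'.
case=> p /existsP[q /existsP[r /and4P[pq qr wpq wqr]]].
pose e := [ffun j : 'I_3 => nth p [:: p; q; r] j].
exists [ffun j => w (e j)]; apply/existsP; exists e.
apply/and3P; split.
- apply/forallP => a; apply/forallP => c; rewrite !ffunE.
  move: a c; apply: ord3_cases; apply: ord3_cases; rewrite /= ?wpq ?wqr ?(ltn_trans wpq wqr) //.
- by apply/forallP => j; rewrite !ffunE inE.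
- apply/forallP => a; apply/forallP => c; rewrite !ffunE /pat123 !perm1.
  move: a c; apply: ord3_cases; apply: ord3_cases;
    rewrite /= ?ltnn ?pq ?qr ?(ltn_trans pq qr) ?ltnNge ?(ltnW pq) ?(ltnW qr) ?(ltnW (ltn_trans pq qr)) //.
Qed.

Lemma cp132 N k (w : {ffun 'I_N -> 'I_k}) : contains_pattern (Bof w) pat132 =
  [exists p : 'I_N, exists q : 'I_N, exists r : 'I_N, [&& p < q, q < r, w p < w r & w r < w q]].
Proof.
apply/existsP/existsP.
  case=> ix /existsP[e /and3P[/forallP Hix /forallP He /forallP Hp]].
  have We : forall j, w (e j) = ix j by move=> j; have := He j; rewrite ffunE inE => /eqP.
  have Hp' : forall a c, (e a < e c) = (pat132 a < pat132 c).
    by move=> a c; have /forallP /(_ c) /eqP := Hp a.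
  have Hix' : forall a c : 'I_3, a < c -> ix a < ix c.
    by move=> a c ac; have /forallP /(_ c) /implyP := Hix a; apply.
  exists (e o0); apply/existsP; exists (e o2); apply/existsP; exists (e o1).
  by rewrite !Hp' !We !Hix' // p132_0 p132_1 p132_2.
case=> p /existsP[q /existsP[r /and4P[pq qr wpr wrq]]].
pose e := [ffun j : 'I_3 => nth p [:: p; r; q] j].
exists [ffun j => w (e j)]; apply/existsP; exists e.
apply/and3P; split.
- apply/forallP => a; apply/forallP => c; rewrite !ffunE.
  move: a c; apply: ord3_cases; apply: ord3_cases; rewrite /= ?wpr ?wrq ?(ltn_trans wpr wrq) //.
- by apply/forallP => j; rewrite !ffunE inE.
- apply/forallP => a; apply/forallP => c; rewrite !ffunE.
  move: a c; apply: ord3_cases; apply: ord3_cases; rewrite ?p132_0 ?p132_1 ?p132_2;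
    rewrite /= ?ltnn ?pq ?qr ?(ltn_trans pq qr) ?ltnNge ?(ltnW pq) ?(ltnW qr) ?(ltnW (ltn_trans pq qr)) //.
Qed.

Definition gw N k (w : {ffun 'I_N -> 'I_k}) (p : nat) : nat :=
  oapp (fun i : 'I_N => nat_of_ord (w i)) 0 (insub p).
Definition Lw N k (w : {ffun 'I_N -> 'I_k}) : seq nat := map (gw w) (iota 0 N).

Lemma gw_val N k (w : {ffun 'I_N -> 'I_k}) (i : 'I_N) : gw w i = w i.
Proof. by rewrite /gw valK. Qed.

Lemma gw_lt N k (w : {ffun 'I_N -> 'I_k}) p (pN : p < N) : gw w p = w (Ordinal pN).
Proof. by rewrite -gw_val. Qed.

Lemma av123_Lw N k (w : {ffun 'I_N -> 'I_k}) : av123 (Lw w) =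
  ~~ [exists p : 'I_N, exists q : 'I_N, exists r : 'I_N, [&& p < q, q < r, w p < w q & w q < w r]].
Proof.
apply/av123_iota/negP => [H|H p q r _ pq qr rN fpq].
  case/existsP => p /existsP[q /existsP[r /and4P[pq qr wpq wqr]]].
  have := H p q r (leq0n _) pq qr (ltn_ord r); rewrite !gw_val => /(_ wpq).
  by rewrite leqNgt wqr.
rewrite leqNgt; apply/negP => fqr; apply: H.
have qN := ltn_trans qr rN; have pN := ltn_trans pq qN.
apply/existsP; exists (Ordinal pN); apply/existsP; exists (Ordinal qN); apply/existsP; exists (Ordinal rN).
by rewrite /= pq qr -!gw_lt fpq fqr.
Qed.

Lemma av132_Lw N k (w : {ffun 'I_N -> 'I_k}) : av132 (Lw w) =
  ~~ [exists p : 'I_N, exists q : 'I_N, exists r : 'I_N, [&& p < q, q < r, w p < w r & w r < w q]].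
Proof.
apply/av132_iota/negP => [H|H p q r _ pq qr rN fpq fpr].
  case/existsP => p /existsP[q /existsP[r /and4P[pq qr wpr wrq]]].
  have := H p q r (leq0n _) pq qr (ltn_ord r); rewrite !gw_val => /(_ (ltn_trans wpr wrq) wpr).
  by rewrite leqNgt wrq.
rewrite leqNgt; apply/negP => frq; apply: H.
have qN := ltn_trans qr rN; have pN := ltn_trans pq qN.
apply/existsP; exists (Ordinal pN); apply/existsP; exists (Ordinal qN); apply/existsP; exists (Ordinal rN).
by rewrite /= pq qr -!gw_lt fpr frq.
Qed.

Lemma Lw_enum N k (w : {ffun 'I_N -> 'I_k}) : Lw w = [seq nat_of_ord (w x) | x <- enum 'I_N].
Proof. by rewrite /Lw -val_enum_ord -map_comp; apply: eq_map => x /=; rewrite gw_val. Qed.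

Lemma Lw_lt N k (w : {ffun 'I_N -> 'I_k}) : all (fun y => y < k) (Lw w).
Proof. by rewrite Lw_enum; apply/allP => y /mapP[x _ ->]. Qed.

Lemma Lw_inj N k : injective (@Lw N k).
Proof.
move=> w1 w2 E; apply/ffunP => x; apply: val_inj.
have := congr1 (fun s => nth 0 s x) E; rewrite /Lw /= !(nth_map 0) ?size_iota //.
by rewrite nth_iota // add0n !gw_val.
Qed.

Lemma card_set_count (T : finType) (P : pred T) : #|[set w | P w]| = count P (enum T).
Proof. rewrite cardsE cardE /enum_mem size_filter count_filter. by apply: eq_count => y; rewrite /= !inE andbT. Qed.

Lemma card_words N k (Q : pred (seq nat)) :
  #|[set w : {ffun 'I_N -> 'I_k} | Q (Lw w)]| = count Q (all_words k N).
Proof.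
rewrite card_set_count (_ : count _ _ = count Q (map (@Lw N k) (enum {ffun 'I_N -> 'I_k}))); last by rewrite count_map.
suff /seq.permP PH : perm_eq (map (@Lw N k) (enum {ffun 'I_N -> 'I_k})) (all_words k N) by apply: PH.
apply: uniq_perm.
- by rewrite map_inj_uniq ?enum_uniq //; exact: Lw_inj.
- exact: uniq_all_words.
move=> s; rewrite mem_all_words; apply/mapP/andP => [[w _ ->]|[/eqP sz al]].
  by rewrite /Lw size_map size_iota eqxx Lw_lt.
have H : forall x : 'I_N, nth 0 s x < k.
  by move=> x; apply: (allP al); apply: mem_nth; rewrite sz.
exists [ffun x => Ordinal (H x)]; first by rewrite mem_enum.
apply: (@eq_from_nth _ 0); first by rewrite /Lw size_map size_iota.
move=> i; rewrite sz => iN.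
by rewrite /Lw (nth_map 0) ?size_iota // nth_iota // add0n gw_lt ffunE.
Qed.

Definition cb k (b : 'I_k -> nat) : nat -> nat := fun y => oapp (fun i : 'I_k => b i) 0 (insub y).

Lemma cont_Lw N k (b : 'I_k -> nat) (w : {ffun 'I_N -> 'I_k}) :
  cont k (cb b) (Lw w) = [forall i, #|[set x | w x == i]| == b i].
Proof.
have C : forall i : 'I_k, count_mem (nat_of_ord i) (Lw w) = #|[set x | w x == i]|.
  by move=> i; rewrite Lw_enum count_map card_set_count; apply: eq_count => x.
apply/allP/forallP => [H i|H y].
  by have := H i; rewrite mem_iota ltn_ord /= C /cb valK => /(_ isT).
rewrite mem_iota add0n => /andP[_ yk]; have := H (Ordinal yk); rewrite -C.
have -> : cb b y = b (Ordinal yk).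
  rewrite /cb; case: insubP => [i _ E|]; last by rewrite yk.
  by congr b; apply: val_inj.
done.
Qed.

Unset Implicit Arguments.
Theorem theorem7 (k : nat) (b : 'I_k -> nat) :
  (forall i, 0 < b i) -> op b pat123 = op b pat132.
Proof.
move=> bpos; rewrite !op_words //.
have lowk : forall N (w : {ffun 'I_N -> 'I_k}), all (fun y => y <= k) (Lw w).
  by move=> N w; apply/allP => y /(allP (Lw_lt w)) /ltnW.
transitivity (count (P123 k k (cb b)) (all_words k (\sum_(i < k) b i))).
  rewrite -card_words; apply: eq_card => w; rewrite !inE /P123 cp123 -av123_Lw cont_Lw.
  by rewrite dab_low ?andbT.
transitivity (count (P132 k k (cb b)) (all_words k (\sum_(i < k) b i))); first exact: core.
rewrite -card_words; apply: eq_card => w; rewrite !inE /P132 cp132 -av132_Lw cont_Lw.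
by rewrite iab_low ?andbT.
Qed.
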